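(* Every multi-parameter random simplicial complex $X\sim X(n,\mathbf{p})$ is homogeneous and spatially independent. Conversely, for every homogeneous and spatially independent random subcomplex $X$ of $\triangle_n$ there exists a multi-parameter $\mathbf{p}=(p_0,\dots,p_{n-1})\in[0,1]^n$ such that $X\sim X(n,\mathbf{p})$.
   Context: $\triangle_n=2^{[n]}$ is the complete simplicial complex on $[n]$; a subcomplex is a family $Y\subset2^{[n]}$ closed under taking subsets, $S_n$ is the set of subcomplexes, and a random subcomplex is an $S_n$-valued random variable. $X$ is homogeneous if $X$ and $gX=\{g(\sigma):\sigma\in X\}$ have the same distribution for every permutation $g$ of $[n]$; spatially independent if $\mathbb{P}(Y_1\cup Y_2\subset X)\mathbb{P}(Y_1\cap Y_2\subset X)=\mathbb{P}(Y_1\subset X)\mathbb{P}(Y_2\subset X)$ for all $Y_1,Y_2\in S_n$. The multi-parameter random simplicial complex $X(n,\mathbf{p})$: retain each vertex of $[n]$ independently with probability $p_0$; each edge with both endpoints retained is added independently with probability $p_1$; iteratively for $i=2,\dots,n-1$, each $i$-simplex (subset of size $i+1$) of $[n]$ all of whose proper faces are already present is added independently with probability $p_i$. Equivalently $\mathbb{P}(X=Y)=\prod_{i=0}^{n-1}p_i^{f_i(Y)}(1-p_i)^{e_i(Y)}$, where $f_i(Y)$ is the number of $i$-simplices of $Y$ and $e_i(Y)$ the number of $i$-simplices $\sigma\notin Y$ all of whose proper subsets lie in $Y$. *)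

(* Defs.v *)
From HB Require Import structures.
From mathcomp Require Import all_boot all_order all_fingroup all_algebra.
Set Implicit Arguments. Unset Strict Implicit. Unset Printing Implicit Defensive.
Import Order.TTheory GRing.Theory Num.Theory.
Local Open Scope ring_scope.

Definition subcomplex n (Y : {set {set 'I_n}}) : bool :=
  (set0 \in Y) && [forall s in Y, forall t : {set 'I_n}, (t \subset s) ==> (t \in Y)].

(* A random subcomplex, given by its probability mass function mu,
   mu Y = P(X = Y). *)
Definition random_subcomplex (R : realFieldType) n (mu : {set {set 'I_n}} -> R) : Prop :=
  (forall Y, 0 <= mu Y) /\ (\sum_(Y : {set {set 'I_n}}) mu Y = 1) /\
  (forall Y, ~~ subcomplex Y -> mu Y = 0).

Definition act_perm n (g : {perm 'I_n}) (Y : {set {set 'I_n}}) : {set {set 'I_n}} :=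
  [set [set g x | x in s] | s : {set 'I_n} in Y].

(* X and gX have the same distribution: P(gX = Y) = P(X = Y). *)
Definition homogeneous (R : realFieldType) n (mu : {set {set 'I_n}} -> R) : Prop :=
  forall (g : {perm 'I_n}) (Y : {set {set 'I_n}}),
    \sum_(Z : {set {set 'I_n}} | act_perm g Z == Y) mu Z = mu Y.

Definition prob_sub (R : realFieldType) n (mu : {set {set 'I_n}} -> R) (Y : {set {set 'I_n}}) : R :=
  \sum_(Z : {set {set 'I_n}} | Y \subset Z) mu Z.

Definition spatially_independent (R : realFieldType) n (mu : {set {set 'I_n}} -> R) : Prop :=
  forall Y1 Y2 : {set {set 'I_n}}, subcomplex Y1 -> subcomplex Y2 ->
    prob_sub mu (Y1 :|: Y2) * prob_sub mu (Y1 :&: Y2) =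
    prob_sub mu Y1 * prob_sub mu Y2.

Definition fnum n (i : nat) (Y : {set {set 'I_n}}) : nat :=
  #|[set s in Y | #|s| == i.+1]|.

Definition enum_ext n (i : nat) (Y : {set {set 'I_n}}) : nat :=
  #|[set s : {set 'I_n} | [&& #|s| == i.+1, s \notin Y &
       [forall t : {set 'I_n}, (t \proper s) ==> (t \in Y)]]]|.

Definition Xnp (R : realFieldType) n (p : 'I_n -> R) (Y : {set {set 'I_n}}) : R :=
  if subcomplex Y then
    \prod_(i < n) (p i ^+ fnum i Y * (1 - p i) ^+ enum_ext i Y)
  else 0.

Definition multiparam (R : realFieldType) n (p : 'I_n -> R) : Prop :=
  forall i, 0 <= p i <= 1.

(* Main.v *)
Require Import Defs.
From HB Require Import structures.
From mathcomp Require Import all_boot all_order all_fingroup all_algebra.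
From mathcomp Require Import zify ring lra.
From Stdlib Require Import Lia.
Import Order.TTheory GRing.Theory Num.Theory.
Set Implicit Arguments. Unset Strict Implicit. Unset Printing Implicit Defensive.
Local Open Scope ring_scope.


Section PermFacts.
Variable n : nat.
Implicit Types (g : {perm 'I_n}) (s t : {set 'I_n}) (Y Z : {set {set 'I_n}}).

Definition hs g s : {set 'I_n} := [set g x | x in s].

Lemma hsK g : cancel (hs g) (hs g^-1).
Proof.
move=> s; rewrite /hs -imset_comp.
by rewrite (eq_imset _ (fun x => permK g x)) imset_id.
Qed.

Lemma hsKV g : cancel (hs g^-1) (hs g).
Proof.
move=> s; rewrite /hs -imset_comp.
by rewrite (eq_imset _ (fun x => permKV g x)) imset_id.
Qed.

Lemma hs_inj g : injective (hs g).
Proof. exact: can_inj (hsK g). Qed.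

Lemma imset_subE (aT rT : finType) (f : aT -> rT) (A B : {set aT}) :
  injective f -> ([set f x | x in A] \subset [set f x | x in B]) = (A \subset B).
Proof.
move=> fi; apply/idP/idP; last exact: imsetS.
move/subsetP=> H; apply/subsetP=> x xA.
by rewrite -(mem_imset _ _ fi) H // mem_imset.
Qed.

Lemma act_hs g Y : act_perm g Y = [set hs g s | s in Y].
Proof. by []. Qed.

Lemma actpK g : cancel (act_perm g) (act_perm g^-1).
Proof.
move=> Y; rewrite !act_hs -imset_comp.
by rewrite (eq_imset _ (fun x => hsK g x)) imset_id.
Qed.

Lemma actpKV g : cancel (act_perm g^-1) (act_perm g).
Proof.
move=> Y; rewrite !act_hs -imset_comp.
by rewrite (eq_imset _ (fun x => hsKV g x)) imset_id.
Qed.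

Lemma actp_inj g : injective (act_perm g).
Proof. exact: can_inj (actpK g). Qed.

Lemma mem_actp g Y s : (s \in act_perm g Y) = (hs g^-1 s \in Y).
Proof. by rewrite -{1}(hsKV g s) act_hs mem_imset //; exact: hs_inj. Qed.

Lemma hs_sub g s t : (hs g s \subset hs g t) = (s \subset t).
Proof. by apply: imset_subE; exact: perm_inj. Qed.

Lemma actp_sub g Y Z : (act_perm g Y \subset act_perm g Z) = (Y \subset Z).
Proof. by rewrite !act_hs imset_subE //; exact: hs_inj. Qed.

Lemma hs0 g : hs g set0 = set0.
Proof. by rewrite /hs imset0. Qed.

Lemma card_hs g s : #|hs g s| = #|s|.
Proof. by rewrite card_imset //; exact: perm_inj. Qed.

Lemma subcomplex_act g Y : subcomplex Y -> subcomplex (act_perm g Y).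
Proof.
case/andP=> Y0 /forallP HY; apply/andP; split.
  by rewrite mem_actp hs0.
apply/forallP=> s; apply/implyP; rewrite mem_actp => sY.
apply/forallP=> t; apply/implyP=> ts; rewrite mem_actp.
have := HY (hs g^-1 s); rewrite sY => /forallP/(_ (hs g^-1 t)).
by rewrite hs_sub ts.
Qed.

Lemma act_powerset g s : act_perm g (powerset s) = powerset (hs g s).
Proof.
apply/setP=> t; rewrite mem_actp !powersetE.
by rewrite -(hs_sub g) hsKV.
Qed.

Lemma act_bd g s : act_perm g (powerset s :\ s) = powerset (hs g s) :\ hs g s.
Proof.
apply/setP=> t; rewrite mem_actp !in_setD1 !powersetE.
rewrite -(hs_sub g) hsKV; congr (_ && _).
by rewrite -(inj_eq (@hs_inj g)) hsKV.
Qed.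

Lemma perm_set (A B : {set 'I_n}) : #|A| = #|B| -> exists g, hs g A = B.
Proof.
move: {2}#|A :\: B|%N (leqnn #|A :\: B|) => k.
elim: k A => [|k IH] A hk hAB.
  exists 1%g; apply/eqP; rewrite eqEcard -hAB card_hs leqnn andbT.
  move: hk; rewrite leqn0 cards_eq0 setD_eq0 => sAB.
  by rewrite /hs (eq_imset _ (fun x => perm1 x)) imset_id.
case: (set_0Vmem (A :\: B)) => [AB0|[x]].
  by apply: (IH A) => //; rewrite AB0 cards0.
rewrite in_setD => /andP[xB xA].
have: (0 < #|B :\: A|)%N.
  have e1 := cardsID B A; have e2 := cardsID A B.
  have : (0 < #|A :\: B|)%N by apply/card_gt0P; exists x; rewrite in_setD xB xA.
  rewrite setIC in e1; lia.
case/card_gt0P=> y; rewrite in_setD => /andP[yA yB].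
set A' := hs (tperm x y) A.
have hA' : #|A'| = #|B| by rewrite card_hs.
have pr : A' :\: B \proper A :\: B.
  apply/properP; split; last first.
    apply: (@ex_intro2 _ _ _ x); first by rewrite in_setD xB xA.
    rewrite in_setD xB /=; apply/imsetP=> [[w wA]].
    case: (eqVneq w x) => [->|wx]; first by rewrite tpermL => exy; move: yA; rewrite -exy xA.
    case: (eqVneq w y) => [wy|wy]; first by move: yA; rewrite -wy wA.
    by rewrite tpermD 1?eq_sym // => xw; move: wx; rewrite xw eqxx.
  apply/subsetP=> z; rewrite !in_setD => /andP[zB /imsetP[w wA zE]]; subst z.
  move: zB; case: (eqVneq w x) => [->|wx]; first by rewrite tpermL yB.
  case: (eqVneq w y) => [wy|wy]; first by move: yA; rewrite -wy wA.
  by rewrite tpermD 1?eq_sym // => ->; rewrite wA andbT.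
have hk' : (#|A' :\: B| <= k)%N by have := proper_card pr; lia.
have [g hg] := IH A' hk' hA'.
exists (tperm x y * g)%g; rewrite -hg /hs -imset_comp.
by apply: eq_imset => z /=; rewrite permM.
Qed.

End PermFacts.


Section Constr.
Variable R : realFieldType.

Lemma sum_constr (U : finType) (f g : U -> R) (A B : {set U}) : [disjoint A & B] ->
  \sum_(C : {set U} | (A \subset C) && [disjoint B & C])
      \prod_x (if x \in C then f x else g x)
  = \prod_x (if x \in A then f x else if x \in B then g x else f x + g x).
Proof.
move=> dAB.
pose F x := if x \in B then 0 else f x; pose G x := if x \in A then 0 else g x.
transitivity (\prod_x (F x + G x)); last first.
  apply: eq_bigr => x _; rewrite /F /G.
  case: (boolP (x \in A)) => xA; first by rewrite (disjointFr dAB xA) addr0.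
  by case: (boolP (x \in B)) => xB; rewrite ?add0r.
rewrite bigA_distr big_mkcond /=; apply: eq_big => // C _.
case: ifP => [/andP[sAC dBC]|hC].
  apply: eq_bigr => x _; rewrite /F /G; case: ifP => xC.
    by rewrite (disjointFl dBC xC).
  by case: ifP => // xA; move: xC; rewrite (subsetP sAC x xA).
move/negbT: hC; rewrite negb_and => /orP[/subsetPn[x xA xC]|].
  by rewrite (bigD1 x) //= (negPf xC) /G xA mul0r.
rewrite -setI_eq0 => /set0Pn[x]; rewrite inE => /andP[xB xC].
by rewrite (bigD1 x) //= xC /F xB mul0r.
Qed.

Lemma disj0 (U : finType) (C : {set U}) : [disjoint set0 & C].
Proof. by rewrite -setI_eq0 set0I. Qed.

Lemma disj0r (U : finType) (C : {set U}) : [disjoint C & set0].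
Proof. by rewrite -setI_eq0 setI0. Qed.

End Constr.

Section XnpFacts.
Variables (R : realFieldType) (n : nat) (p : 'I_n -> R).
Implicit Types (s t : {set 'I_n}) (Y Z C : {set {set 'I_n}}).

Definition q s : R := \prod_(i < n | #|s| == i.+1) p i.
Definition wt C : R := \prod_(s : {set 'I_n}) (if s \in C then q s else 1 - q s).
Definition Phi C := [set s : {set 'I_n} | [forall t : {set 'I_n}, (t \subset s) ==> (t \in C)]].
Definition extY Y := [set s : {set 'I_n} |
   (s \notin Y) && [forall t : {set 'I_n}, (t \proper s) ==> (t \in Y)]].

Lemma q0 : q set0 = 1.
Proof. by rewrite /q cards0; apply: big_pred0. Qed.

Lemma prod_pick (F : 'I_n -> R) s (i : 'I_n) : (#|s| == i.+1)%N ->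
  \prod_(j < n | #|s| == j.+1) F j = F i.
Proof.
move=> /eqP hs; apply: big_pred1 => j /=; rewrite hs eqSS eq_sym.
by [].
Qed.

Lemma exists_i s : s != set0 -> exists i : 'I_n, (#|s| == i.+1)%N.
Proof.
move=> s0; have h1 : (#|s| <= n)%N by rewrite -[X in (_ <= X)%N]card_ord max_card.
have h2 : (0 < #|s|)%N by rewrite card_gt0.
have h3 : (#|s|.-1 < n)%N by lia.
by exists (Ordinal h3); rewrite /= prednK.
Qed.

Lemma Phi_sub C : Phi C \subset C.
Proof.
by apply/subsetP=> s; rewrite inE => /forallP/(_ s); rewrite subxx.
Qed.

Lemma Phi_subcx C : set0 \in C -> subcomplex (Phi C).
Proof.
move=> C0; apply/andP; split.
  rewrite inE; apply/forallP=> t; apply/implyP; rewrite subset0 => /eqP -> //.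
apply/forallP=> s; apply/implyP; rewrite inE => /forallP Hs.
apply/forallP=> t; apply/implyP=> ts; rewrite inE; apply/forallP=> u.
apply/implyP=> ut; have := Hs u; rewrite (subset_trans ut ts) //.
Qed.

Lemma wt0 C : set0 \notin C -> wt C = 0.
Proof.
by move=> C0; rewrite /wt (bigD1 set0) //= (negPf C0) q0 subrr mul0r.
Qed.

Lemma PhiE Y C : subcomplex Y ->
  (Phi C == Y) = (Y \subset C) && [disjoint extY Y & C].
Proof.
case/andP=> Y0 /forallP HY.
apply/eqP/andP => [<-|[sYC dC]].
  split; first exact: Phi_sub.
  rewrite -setI_eq0; apply/eqP/setP=> s; rewrite in_setI in_set0.
  apply/negP=> /andP[sE sC]; move: sE; rewrite inE => /andP[sPhi /forallP Hp].
  move/negP: sPhi; apply.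
  rewrite inE; apply/forallP=> t; apply/implyP=> ts.
  case: (eqVneq t s) => [->//|ts'].
  have tps : t \proper s by rewrite properEneq ts' ts.
  by have := Hp t; rewrite tps /= => /(subsetP (Phi_sub C)).
have key : forall k s, (#|s| < k)%N -> s \in Phi C -> s \in Y.
  elim=> [//|k IH] s hk sP.
  case: (boolP (s \in Y)) => // sY.
  have sE : s \in extY Y.
    rewrite inE sY /=; apply/forallP=> t; apply/implyP=> tps.
    apply: IH; first by have := proper_card tps; lia.
    move: sP; rewrite !inE => /forallP Hs; apply/forallP=> u; apply/implyP=> ut.
    by have := Hs u; rewrite (subset_trans ut (proper_sub tps)).
  have sC : s \in C by move: sP; rewrite inE => /forallP/(_ s); rewrite subxx.
  by rewrite (disjointFr dC sE) in sC.
apply/setP=> s; apply/idP/idP; first exact: key.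
move=> sY; rewrite inE; apply/forallP=> t; apply/implyP=> ts.
apply: (subsetP sYC); have := HY s; rewrite sY => /forallP/(_ t).
by rewrite ts.
Qed.


Lemma ext_disj Y : [disjoint Y & extY Y].
Proof.
rewrite -setI_eq0; apply/eqP/setP=> s; rewrite in_setI in_set0 inE.
by case: (s \in Y).
Qed.

Lemma prod_if_card (P : pred {set 'I_n}) (F : 'I_n -> R) :
  \prod_(s : {set 'I_n}) \prod_(i < n | P s && (#|s| == i.+1)) F i
  = \prod_(i < n) F i ^+ #|[set s | P s && (#|s| == i.+1)]|.
Proof.
rewrite (exchange_big_dep xpredT) //=; apply: eq_bigr => i _.
rewrite -prodr_const; apply: eq_bigl => s; by rewrite inE.
Qed.

Lemma XnpE Y : Xnp p Y = \sum_(C | Phi C == Y) wt C.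
Proof.
rewrite /Xnp; case: ifP => HY; last first.
  symmetry; apply: big1 => C /eqP PC; apply: wt0; apply/negP => C0.
  by have := Phi_subcx C0; rewrite PC HY.
rewrite (eq_bigl _ _ (fun C => PhiE C HY)) sum_constr ?ext_disj //.
transitivity (\prod_s ((if s \in Y then q s else 1) *
                       (if s \in extY Y then 1 - q s else 1))); last first.
  apply: eq_bigr => s _; case: (boolP (s \in Y)) => sY.
    by rewrite (disjointFr (ext_disj Y) sY) mulr1.
  by rewrite mul1r; case: ifP => // _; rewrite addrC subrK.
rewrite !big_split /=; congr (_ * _).
  rewrite -(prod_if_card (fun s => s \in Y)); apply: eq_bigr => s _.
  case: ifP => sY //=; last by rewrite big_pred0.
transitivity (\prod_(i < n) (1 - p i) ^+ #|[set s | (s \in extY Y) && (#|s| == i.+1)]|).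
  apply: eq_bigr => i _; congr (_ ^+ _); apply: eq_card => s; rewrite !inE.
  by rewrite andbC -andbA.
rewrite -(prod_if_card (fun s => s \in extY Y) (fun i => 1 - p i)).
apply: eq_bigr => s _; case: ifP => sE /=; last by rewrite big_pred0.
have s0 : s != set0.
  apply/negP=> /eqP s0; move: sE; rewrite inE s0 => /andP[].
  by case/andP: HY => ->.
have [i hi] := exists_i s0.
by rewrite /q !(prod_pick _ hi).
Qed.

Lemma prob_subXnp Y : subcomplex Y ->
  prob_sub (Xnp p) Y = \prod_s (if s \in Y then q s else 1).
Proof.
move=> HY; rewrite /prob_sub.
rewrite (eq_bigr _ (fun Z _ => XnpE Z)).
transitivity (\sum_(C | Y \subset Phi C) wt C).
  rewrite [RHS](partition_big Phi (fun Z => Y \subset Z)) //=.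
  apply: eq_bigr => Z YZ; apply: eq_bigl => C.
  by case: (eqVneq (Phi C) Z) => [->|]; rewrite ?YZ ?andbF.
have HYs : forall C, (Y \subset Phi C) = (Y \subset C) && [disjoint set0 & C].
  move=> C; rewrite disj0 andbT; apply/idP/idP.
    by move=> H; apply: subset_trans H (Phi_sub C).
  case/andP: HY => _ /forallP HY'.
  move=> /subsetP YC; apply/subsetP=> s sY; rewrite inE; apply/forallP=> t.
  apply/implyP=> ts; apply: YC; have := HY' s; rewrite sY => /forallP/(_ t).
  by rewrite ts.
rewrite (eq_bigl _ _ HYs) sum_constr ?disj0r //.
apply: eq_bigr => s _; case: ifP => // _; by rewrite in_set0 addrC subrK.
Qed.

End XnpFacts.


Section Main.
Variables (R : realFieldType) (n : nat).
Implicit Types (s t : {set 'I_n}) (Y Z C : {set {set 'I_n}}) (mu : {set {set 'I_n}} -> R). Implicit Types (g : {perm 'I_n}).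

Lemma mobius (mu1 mu2 : {set {set 'I_n}} -> R) :
  (forall Y, ~~ subcomplex Y -> mu1 Y = 0) -> (forall Y, ~~ subcomplex Y -> mu2 Y = 0) ->
  (forall Y, subcomplex Y -> prob_sub mu1 Y = prob_sub mu2 Y) -> forall Y, mu1 Y = mu2 Y.
Proof.
move=> h1 h2 hp.
suff H : forall k Y, (#|~: Y| < k)%N -> mu1 Y = mu2 Y.
  by move=> Y; apply: (H _ Y (ltnSn _)).
elim=> // k IH Y hk.
case: (boolP (subcomplex Y)) => HY; last by rewrite h1 ?h2.
have := hp Y HY; rewrite /prob_sub (bigD1 Y) //= [X in _ = X](bigD1 Y) //=.
have -> : \sum_(Z : {set {set 'I_n}} | (Y \subset Z) && (Z != Y)) mu1 Z =
          \sum_(Z : {set {set 'I_n}} | (Y \subset Z) && (Z != Y)) mu2 Z.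
  apply: eq_bigr => Z /andP[YZ ZY]; apply: IH.
  have : Y \proper Z by rewrite properEneq eq_sym ZY YZ.
  rewrite -properC => /proper_card; lia.
by move/addIr.
Qed.

Lemma prob_sub_ge0 mu Y : (forall Z, 0 <= mu Z) -> 0 <= prob_sub mu Y.
Proof. by move=> h; apply: sumr_ge0 => Z _. Qed.

Lemma prob_sub_mono mu Y1 Y2 : (forall Z, 0 <= mu Z) -> Y1 \subset Y2 ->
  prob_sub mu Y2 <= prob_sub mu Y1.
Proof.
move=> h s12; rewrite /prob_sub [X in _ <= X]big_mkcond [X in X <= _]big_mkcond /=.
apply: ler_sum => Z _; case: ifP => h2; first by rewrite (subset_trans s12 h2).
by case: ifP.
Qed.

Lemma hom_sum (F : {set {set 'I_n}} -> R) g Y :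
  \sum_(Z | act_perm g Z == Y) F Z = F (act_perm g^-1 Y).
Proof.
apply: big_pred1 => Z /=; apply/eqP/eqP => [<-|->]; by rewrite ?actpK ?actpKV.
Qed.

Lemma prob_sub_act mu g Y : homogeneous mu ->
  prob_sub mu (act_perm g Y) = prob_sub mu Y.
Proof.
move=> hom; rewrite /prob_sub.
rewrite (eq_bigr _ (fun Z _ => esym (hom g Z))).
rewrite (exchange_big_dep xpredT) //=.
rewrite [RHS]big_mkcond; apply: eq_bigr => W _.
rewrite big_mkcondl /= (eq_bigl (fun Z => Z == act_perm g W)); last first.
  by move=> Z; rewrite eq_sym.
by rewrite big_pred1_eq actp_sub.
Qed.

Lemma subcx_powerset s : subcomplex (powerset s).
Proof.
apply/andP; split; first by rewrite powersetE sub0set.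
apply/forallP=> t; apply/implyP; rewrite powersetE => ts.
apply/forallP=> u; apply/implyP=> ut; rewrite powersetE.
exact: subset_trans ut ts.
Qed.

Lemma subcxU Y1 Y2 : subcomplex Y1 -> subcomplex Y2 -> subcomplex (Y1 :|: Y2).
Proof.
case/andP=> h1 /forallP H1; case/andP=> h2 /forallP H2.
apply/andP; split; first by rewrite inE h1.
apply/forallP=> s; apply/implyP; rewrite inE => /orP[sY|sY];
  apply/forallP=> t; apply/implyP=> ts; rewrite inE.
  by have := H1 s; rewrite sY => /forallP/(_ t)/implyP/(_ ts) ->.
by have := H2 s; rewrite sY => /forallP/(_ t)/implyP/(_ ts) ->; rewrite orbT.
Qed.

Lemma subcxI Y1 Y2 : subcomplex Y1 -> subcomplex Y2 -> subcomplex (Y1 :&: Y2).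
Proof.
case/andP=> h1 /forallP H1; case/andP=> h2 /forallP H2.
apply/andP; split; first by rewrite inE h1 h2.
apply/forallP=> s; apply/implyP; rewrite inE => /andP[sY1 sY2].
apply/forallP=> t; apply/implyP=> ts; rewrite inE.
have := H1 s; rewrite sY1 => /forallP/(_ t)/implyP/(_ ts) ->.
by have := H2 s; rewrite sY2 => /forallP/(_ t)/implyP/(_ ts) ->.
Qed.

Lemma Xnp0 (p : 'I_n -> R) Y : ~~ subcomplex Y -> Xnp p Y = 0.
Proof. by move=> h; rewrite /Xnp (negPf h). Qed.

Lemma Xnp_hom (p : 'I_n -> R) : homogeneous (Xnp p).
Proof.
move=> g Y; rewrite hom_sum.
apply: (@mobius (fun Z => Xnp p (act_perm g^-1 Z)) (Xnp p)) => //.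
- move=> Z hZ; apply: Xnp0; apply: contra hZ => /(subcomplex_act g).
  by rewrite actpKV.
- exact: Xnp0.
move=> Z HZ; rewrite /prob_sub (reindex_inj (@actp_inj _ g)) /=.
under eq_bigl => W do rewrite -(actp_sub g^-1) actpK.
rewrite (eq_bigr _ (fun W _ => congr1 (Xnp p) (actpK g W))).
rewrite -/(prob_sub (Xnp p) (act_perm g^-1 Z)).
rewrite prob_subXnp ?subcomplex_act //.
rewrite -/(prob_sub (Xnp p) Z) prob_subXnp //.
rewrite (reindex_inj (@hs_inj _ g^-1)) /=; apply: eq_bigr => s _.
by rewrite mem_actp invgK hsKV /q card_hs.
Qed.

Lemma Xnp_si (p : 'I_n -> R) : spatially_independent (Xnp p).
Proof.
move=> Y1 Y2 h1 h2.
rewrite !prob_subXnp ?subcxU ?subcxI // -!big_split /=.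
apply: eq_bigr => s _; rewrite in_setU in_setI.
by case: (s \in Y1); case: (s \in Y2); rewrite /= ?mul1r ?mulr1 // mulrC.
Qed.

Definition bd s := powerset s :\ s.
Definition ratio mu s :=
  if prob_sub mu (bd s) == 0 then 0 else prob_sub mu (powerset s) / prob_sub mu (bd s).
Definition pmu mu (i : 'I_n) : R :=
  if [pick s : {set 'I_n} | #|s| == i.+1] is Some s then ratio mu s else 0.

Lemma ratio_act mu s t : homogeneous mu -> #|s| = #|t| -> ratio mu s = ratio mu t.
Proof.
move=> hom hst; have [g hg] := perm_set hst.
by rewrite -hg /ratio /bd -act_bd -act_powerset !prob_sub_act.
Qed.

Lemma pmu_ratio mu s (i : 'I_n) : homogeneous mu -> (#|s| == i.+1)%N ->
  pmu mu i = ratio mu s.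
Proof.
move=> hom hs; rewrite /pmu; case: pickP => [t ht|/(_ s)]; last by rewrite hs.
by apply: ratio_act => //; rewrite (eqP ht) (eqP hs).
Qed.

Lemma ratio_range mu s : (forall Z, 0 <= mu Z) -> 0 <= ratio mu s <= 1.
Proof.
move=> h; rewrite /ratio; case: ifP => [_|/negbT hP]; first by rewrite lexx ler01.
have P0 : 0 < prob_sub mu (bd s) by rewrite lt_def hP prob_sub_ge0.
rewrite divr_ge0 ?prob_sub_ge0 //= ler_pdivrMr // mul1r.
by apply: prob_sub_mono => //; exact: subD1set.
Qed.

Lemma prob_prod mu : random_subcomplex mu -> homogeneous mu ->
  spatially_independent mu -> forall Y, subcomplex Y ->
  prob_sub mu Y = \prod_s (if s \in Y then q (pmu mu) s else 1).
Proof.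
move=> [h0 [h1 hsupp]] hom si.
have P1 : prob_sub mu [set set0] = 1.
  rewrite /prob_sub -h1 big_mkcond; apply: eq_bigr => Z _; rewrite sub1set.
  case: ifP => // Z0; rewrite hsupp //; apply/negP => /andP[]; rewrite Z0.
  by [].
suff H : forall k Y, (#|Y| < k)%N -> subcomplex Y ->
    prob_sub mu Y = \prod_s (if s \in Y then q (pmu mu) s else 1).
  by move=> Y; apply: (H _ Y (ltnSn _)).
elim=> // k IH Y hk HY.
have Y0 : set0 \in Y by case/andP: HY.
case: (arg_maxnP (fun s : {set 'I_n} => #|s|) Y0) => sg sgY sgmax.
have {}sgY : sg \in Y := sgY.
have HYd : forall s t, s \in Y -> t \subset s -> t \in Y.
  move=> s t sY ts; case/andP: HY => _ /forallP/(_ s); rewrite sY.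
  by move=> /forallP/(_ t); rewrite ts.
case: (eqVneq sg set0) => [sg0|sgn0].
  have -> : Y = [set set0].
    apply/setP=> s; rewrite inE; apply/idP/eqP => [sY|->//].
    by apply/eqP; rewrite -cards_eq0 -leqn0; have := sgmax s sY; rewrite sg0 cards0.
  rewrite P1 (bigD1 set0) ?inE //= eqxx /= q0 mul1r big1 // => s /negPf.
  by rewrite inE => ->.
set Y' := Y :\ sg.
have HY' : subcomplex Y'.
  apply/andP; split; first by rewrite in_setD1 Y0 eq_sym sgn0.
  apply/forallP=> s; apply/implyP; rewrite in_setD1 => /andP[ssg sY].
  apply/forallP=> t; apply/implyP=> ts; rewrite in_setD1 (HYd s t) // andbT.
  apply/eqP=> tsg; move: ts; rewrite tsg => sgs.
  have := sgmax s sY; rewrite /= => hle.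
  have : sg == s by rewrite eqEcard sgs hle.
  by rewrite eq_sym (negPf ssg).
have YU : Y' :|: powerset sg = Y.
  apply/setP=> s; rewrite in_setU in_setD1 powersetE.
  apply/idP/idP => [/orP[/andP[_ ->]//|]|sY]; first exact: HYd.
  by case: (eqVneq s sg) => [->|]; rewrite ?subxx ?orbT //= sY.
have YI : Y' :&: powerset sg = bd sg.
  apply/setP=> s; rewrite in_setI in_setD1 /bd in_setD1 powersetE.
  case: (eqVneq s sg) => //= _; apply/andP/idP => [[]//|ss]; split=> //.
  exact: HYd ss.
have hsi := si Y' (powerset sg) HY' (subcx_powerset sg); rewrite YU YI in hsi.
have hk' : (#|Y'| < k)%N.
  by move: hk; rewrite /Y' (cardsD1 sg Y) sgY add1n ltnS.
have IH' := IH Y' hk' HY'.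
have [i hi] := exists_i sgn0.
have qsg : q (pmu mu) sg = ratio mu sg by rewrite /q (prod_pick _ hi) (pmu_ratio hom hi).
have prodE : \prod_s (if s \in Y then q (pmu mu) s else 1) =
    q (pmu mu) sg * \prod_s (if s \in Y' then q (pmu mu) s else 1).
  rewrite (bigD1 sg) //= [in RHS](bigD1 sg) //= sgY in_setD1 eqxx /= mul1r.
  by congr (_ * _); apply: eq_bigr => s ssg; rewrite in_setD1 ssg.
rewrite prodE -IH' qsg /ratio; case: ifP => [/eqP P0|/negbT Pn0].
  rewrite mul0r; apply/eqP; rewrite eq_le prob_sub_ge0 // andbT -P0.
  apply: prob_sub_mono => //; apply/subsetP=> s; rewrite /bd in_setD1 powersetE.
  by case/andP=> _; apply: HYd.
rewrite -[LHS](mulfK Pn0) hsi; field; exact: Pn0.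
Qed.

End Main.

Unset Implicit Arguments.

Theorem theorem3p3 (R : realFieldType) (n : nat) :
  (forall p : 'I_n -> R, multiparam p ->
     homogeneous (Xnp p) /\ spatially_independent (Xnp p)) /\
  (forall mu : {set {set 'I_n}} -> R, random_subcomplex mu ->
     homogeneous mu -> spatially_independent mu ->
     exists p : 'I_n -> R, multiparam p /\ forall Y, mu Y = Xnp p Y).
Proof.
split.
  by move=> p _; split; [exact: Xnp_hom | exact: Xnp_si].
move=> mu hmu hom si; exists (pmu mu); split.
  move=> i; rewrite /pmu; case: pickP => [s _|_]; last by rewrite lexx ler01.
  by apply: ratio_range; case: hmu.
apply: mobius.
- by case: hmu => _ [_].
- exact: Xnp0.
by move=> Y HY; rewrite (prob_prod hmu hom si HY) prob_subXnp.
Qed.
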